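(* Under the standing assumptions below, let $i\in P$ with $M_i\neq 0$. Then there exists $w\in P$ with $w\le i$ such that $D_w\subsetneq M_w$, i.e. $M_w$ contains an indecomposable element.
   Context: Standing assumptions: $R$ is a principal ideal domain; $P$ is a lattice with a compatible abelian group structure ($(P,+,0)$ abelian group, $a\le b\Rightarrow a+c\le b+c$). $U_0=\{s\in P:s\ge 0\}$, $R[U_0]$ the monoid ring (finite sums $\sum c_st^s$, $c_s\in R$), graded by $\deg(ct^s)=s$. $M=\bigoplus_{a\in P}M_a$ is a $P$-graded $R[U_0]$-module (persistence module) that is graded projective, with each $M_a$ a finitely generated $R$-module. For $r\in P$, $D_r=\sum_{q<r}t^{\,r-q}M_q\subseteq M_r$ (sum of the images of the structure maps $M_q\to M_r$ over all $q<r$). An element $x\in M_i$ is decomposable if $x\in D_i$ and indecomposable if $x\in M_i\setminus D_i$. *)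

(* Defs.v *)
From HB Require Import structures.
From mathcomp Require Import all_boot all_order all_algebra.
Set Implicit Arguments. Unset Strict Implicit. Unset Printing Implicit Defensive.
Import Order.TTheory GRing.Theory.
Local Open Scope ring_scope.

(* Abelian group structure (+, -, 0) on a lattice P, compatible with the order:
   a <= b -> a + c <= b + c.  (Stated as explicit data + axioms, since MathComp
   has no ready-made "lattice-ordered abelian group" structure.) *)
Record lattice_group d (P : latticeType d) := LatticeGroup {
  lg_add : P -> P -> P;
  lg_opp : P -> P;
  lg_zero : P;
  lg_addA : forall a b c, lg_add a (lg_add b c) = lg_add (lg_add a b) c;
  lg_addC : forall a b, lg_add a b = lg_add b a;
  lg_add0 : forall a, lg_add lg_zero a = a;
  lg_addN : forall a, lg_add (lg_opp a) a = lg_zero;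
  lg_compat : forall a b c, (a <= b)%O -> (lg_add a c <= lg_add b c)%O
}.

Definition is_ideal (R : comPzRingType) (I : R -> Prop) : Prop :=
  I 0 /\ (forall x y, I x -> I y -> I (x + y)) /\ (forall r x, I x -> I (r * x)).

Definition is_pid (R : idomainType) : Prop :=
  forall I : R -> Prop, is_ideal I -> exists a : R, forall x, I x <-> exists r, x = r * a.

Definition rlinear (R : pzRingType) (U V : lmodType R) (f : U -> V) : Prop :=
  forall (k : R) (x y : U), f (k *: x + y) = k *: f x + f y.

Definition fin_gen (R : pzRingType) (V : lmodType R) : Prop :=
  exists (n : nat) (g : 'I_n -> V), forall x : V,
    exists c : 'I_n -> R, x = \sum_(k < n) c k *: g k.

(* A P-graded R[U_0]-module (persistence module): R-modules M_a (a : P) with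
   structure maps M_a -> M_b for a <= b (multiplication by t^(b-a)),
   R-linear, with identity at a = a and compatible with composition. *)
Record pmod (R : pzRingType) d (P : porderType d) := PMod {
  obj : P -> lmodType R;
  mor : forall a b : P, (a <= b)%O -> obj a -> obj b;
  mor_lin : forall a b (h : (a <= b)%O), rlinear (mor h);
  mor_id : forall a (h : (a <= a)%O) (x : obj a), mor h x = x;
  mor_comp : forall a b c (hab : (a <= b)%O) (hbc : (b <= c)%O) (hac : (a <= c)%O)
               (x : obj a), mor hbc (mor hab x) = mor hac x
}.

Definition pmorph (R : pzRingType) d (P : porderType d) (M N : pmod R P)
  (f : forall a, obj M a -> obj N a) : Prop :=
  (forall a, rlinear (f a)) /\
  (forall a b (h : (a <= b)%O) (x : obj M a), f b (@mor _ _ _ M a b h x) = @mor _ _ _ N a b h (f a x)).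

Definition graded_projective (R : pzRingType) d (P : porderType d) (M : pmod R P) : Prop :=
  forall (N N' : pmod R P) (g : forall a, obj N a -> obj N' a)
         (f : forall a, obj M a -> obj N' a),
    pmorph g -> (forall a (y : obj N' a), exists x, g a x = y) -> pmorph f ->
    exists h : forall a, obj M a -> obj N a,
      pmorph h /\ forall a (x : obj M a), g a (h a x) = f a x.

(* x in D_r = sum_{q<r} t^(r-q) M_q : a finite sum of images of structure maps
   from strictly smaller degrees. *)
Definition in_D (R : pzRingType) d (P : porderType d) (M : pmod R P) (r : P)
  (x : obj M r) : Prop :=
  exists (n : nat) (q : 'I_n -> P) (hq : forall k, (q k < r)%O)
         (y : forall k, obj M (q k)),
    x = \sum_(k < n) @mor _ _ _ M (q k) r (ltW (hq k)) (y k).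
Arguments in_D {R d P} M {r} x.

Definition decomposable (R : pzRingType) d (P : porderType d) (M : pmod R P) (r : P)
  (x : obj M r) : Prop := in_D M x.
Arguments decomposable {R d P} M {r} x.

Definition indecomposable (R : pzRingType) d (P : porderType d) (M : pmod R P) (r : P)
  (x : obj M r) : Prop := ~ in_D M x.
Arguments indecomposable {R d P} M {r} x.
Arguments graded_projective {R d P} M.

(* Main.v *)
Require Import Defs.
From HB Require Import structures.
From mathcomp Require Import all_boot all_order all_algebra.
From mathcomp Require Import finmap.
From mathcomp.multinomials Require Import monalg.
From Stdlib Require Import Classical.
Import Order.TTheory GRing.Theory.
Lemma count_lt (T : eqType) (p q : pred T) (s : seq T) :
  (forall z, p z -> q z) -> (exists2 z, z \in s & q z && ~~ p z) ->
  count p s < count q s.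
Proof.
move=> pq; elim: s => [|a s IH] /=; first by case=> z; rewrite in_nil.
case=> z; rewrite inE => /orP [/eqP-> | zs] H.
  move/andP: H => [-> /negbTE ->] /=.
  by rewrite add0n add1n ltnS sub_count.
have := IH (ex_intro2 _ _ z zs H).
case: (boolP (p a)) => [/pq -> | _] /=; first by rewrite ltn_add2l.
by case: (q a) => /=; rewrite ?add0n ?add1n // => /ltnW.
Qed.

Lemma no_max (d : Order.disp_t) (P : porderType d) (T : eqType) (f : T -> P)
  (s : seq T) : (forall x, x \in s -> exists2 y, y \in s & (f x < f y)%O) -> s = [::].
Proof.
move=> H.
pose c x := count (fun y => (f x < f y)%O) s.
have dec : forall x, x \in s -> exists2 y, y \in s & c y < c x.
  move=> x xs; have [y ys lt] := H x xs; exists y => //.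
  apply: count_lt => [z|]; first by move/(lt_trans lt).
  by exists y => //; rewrite lt ltxx.
have : forall n x, x \in s -> c x < n -> False.
  elim=> [//|n IH] x xs; rewrite ltnS => le.
  have [y ys lt] := dec x xs; apply: (IH y ys); exact: leq_trans lt le.
move=> contra; case E: s => [//|x s'].
by exfalso; apply: (contra (c x).+1 x); rewrite ?E ?inE ?eqxx.
Qed.

Local Open Scope ring_scope.
Set Implicit Arguments. Unset Strict Implicit. Unset Printing Implicit Defensive.


Section Lin.
Variables (R : pzRingType) (U V : lmodType R) (f : U -> V) (hf : rlinear f).
Lemma rl_add x y : f (x + y) = f x + f y.
Proof. by rewrite -[x in LHS]scale1r hf scale1r. Qed.
Lemma rl_0 : f 0 = 0.
Proof. by apply: (@addrI _ (f 0)); rewrite -rl_add !addr0. Qed.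
Lemma rl_scale c x : f (c *: x) = c *: f x.
Proof. by rewrite -[c *: x]addr0 hf rl_0 addr0. Qed.
Lemma rl_sum (I : Type) (r : seq I) (Pr : pred I) (F : I -> U) :
  f (\sum_(j <- r | Pr j) F j) = \sum_(j <- r | Pr j) f (F j).
Proof. exact: (big_morph f rl_add rl_0). Qed.
End Lin.

Section S.
Variables (R : nzRingType) (d : Order.disp_t) (P : latticeType d) (M : pmod R P).
Definition K := {q : P & obj M q}.
Definition Ka0 (a : P) := {k : K | (tag k <= a)%O}.
Definition Ka (a : P) : choiceType := Ka0 a.
Notation N a := {malg R[Ka a]}.

Definition emb a b (h : (a <= b)%O) (k : Ka a) : Ka b :=
  exist _ (val k) (le_trans (valP k) h).

Definition Nmor_def a b (h : (a <= b)%O) (n : N a) : N b :=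
  \sum_(k <- msupp n) << n@_k *g emb h k >>.
Fact Nmor_key : unit. Proof. exact: tt. Qed.
Definition Nmor a b h n := locked_with Nmor_key (@Nmor_def a b h n).
Lemma NmorD a b h n : @Nmor a b h n = Nmor_def h n.
Proof. by rewrite /Nmor unlock. Qed.

Lemma NmorE a b (h : (a <= b)%O) (n : N a) (k' : Ka b) :
  (Nmor h n)@_k' = oapp (fun k => n@_k) 0 (insub (val k') : option (Ka a)).
Proof.
rewrite NmorD /Nmor_def raddf_sum /=.
case: insubP => [k0 Hk0 Ek0|Hn] /=.
  rewrite [in RHS](monalgE n) raddf_sum /=.
  apply: eq_bigr => k _; rewrite !mcoeffU; congr (_ *+ _).
  congr (nat_of_bool _); by rewrite -[LHS](inj_eq val_inj) -[RHS](inj_eq val_inj) /= Ek0.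
rewrite big1 // => k _; rewrite mcoeffU.
case: eqP => // E; exfalso; move/negP: Hn; apply; rewrite -E /=.
exact: valP k.
Qed.


Lemma Nmor_lin a b (h : (a <= b)%O) : rlinear (Nmor h).
Proof.
move=> c x y; apply/malgP => k'.
rewrite mcoeffD mcoeffZ.
have E1 := NmorE h (c*:x+y) k'; have E2 := NmorE h x k'; have E3 := NmorE h y k'.
apply: (etrans E1); apply: esym.
apply: (etrans (f_equal2 (fun u w => c * u + w) E2 E3)); apply: esym.
case: insub => [k|] /=; first by rewrite mcoeffD mcoeffZ.
by rewrite mulr0 addr0.
Qed.

Lemma Nmor_id a (h : (a <= a)%O) (x : N a) : Nmor h x = x.
Proof. by apply/malgP => k'; apply: (etrans (NmorE h x k')); rewrite valK. Qed.

Lemma Nmor_comp a b c (hab : (a <= b)%O) (hbc : (b <= c)%O) (hac : (a <= c)%O)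
  (x : N a) : Nmor hbc (Nmor hab x) = Nmor hac x.
Proof.
apply/malgP => k'; apply: (etrans (NmorE hbc _ k')); apply: esym.
apply: (etrans (NmorE hac x k')); apply: esym.
case: (insubP (Ka0 b) (val k')) => [kb Hb Eb|Hb] /=.
  by apply: (etrans (NmorE hab x kb)); rewrite Eb.
case: (insubP (Ka0 a) (val k')) => [ka Ha Ea|//] /=.
by exfalso; move/negP: Hb; apply; apply: le_trans Ha hab.
Qed.

Definition Npmod : pmod R P := PMod Nmor_lin Nmor_id Nmor_comp.


Definition phi a (k : Ka a) : obj M a :=
  @mor _ _ _ M (tag (val k)) a (valP k) (tagged (val k)).

Definition g_def a (n : N a) : obj M a := \sum_(k <- msupp n) n@_k *: phi k.
Fact g_key : unit. Proof. exact: tt. Qed.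
Definition g a n := locked_with g_key (@g_def a n).
Lemma gD a n : @g a n = g_def n.
Proof. by rewrite /g unlock. Qed.

Lemma g_sup a (n : N a) (S : {fset Ka a}) : (msupp n `<=` S)%fset ->
  g n = \sum_(k <- S) n@_k *: phi k.
Proof.
move=> sub; rewrite gD /g_def; apply: big_fset_incl => // k _ kn.
by rewrite mcoeff_outdom // scale0r.
Qed.

Lemma g_lin a : rlinear (@g a).
Proof.
move=> c x y.
set S := (msupp x `|` msupp y `|` msupp (c *: x + y))%fset.
rewrite (@g_sup _ (c *: x + y) S); last by rewrite /S fsubsetUr.
rewrite (@g_sup _ x S); last by rewrite /S -fsetUA fsubsetUl.
rewrite (@g_sup _ y S); last by apply: fsubset_trans (fsubsetUr (msupp x) _) (fsubsetUl _ _).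
rewrite scaler_sumr -big_split /=; apply: eq_bigr => k _.
by rewrite mcoeffD mcoeffZ scalerDl scalerA.
Qed.

Lemma gU a (c : R) (k : Ka a) : g << c *g k >> = c *: phi k.
Proof.
rewrite (@g_sup _ _ [fset k]%fset) ?msuppU_le // big_seq_fset1.
by rewrite mcoeffUU.
Qed.

Lemma g_mor a b (h : (a <= b)%O) (n : N a) :
  g (Nmor h n) = @mor _ _ _ M a b h (g n).
Proof.
rewrite NmorD /Nmor_def (rl_sum (@g_lin b)) [in RHS]gD /g_def.
rewrite (rl_sum (@mor_lin _ _ _ M a b h)); apply: eq_bigr => k _.
rewrite gU (rl_scale (@mor_lin _ _ _ M a b h)); congr (_ *: _).
by rewrite /phi; exact: esym (@mor_comp _ _ _ M _ _ _ (valP k) h _ _).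
Qed.

Lemma g_pmorph : @pmorph _ _ _ Npmod M g.
Proof. split; [exact: g_lin | move=> a b h x; exact: g_mor]. Qed.

Lemma g_surj a (y : obj M a) : exists x : N a, g x = y.
Proof.
exists << 1 *g (exist _ (existT _ a y) (lexx a) : Ka0 a) >>.
by rewrite gU scale1r /phi mor_id.
Qed.


Lemma main_zero (hproj : graded_projective M) (i : P)
  (HD : forall w, (w <= i)%O -> forall x : obj M w, in_D M x) (x : obj M i) :
  x = 0.
Proof.
have idm : @pmorph _ _ _ M M (fun a (y : obj M a) => y).
  by split => // a c u v.
have [hl [hm hgh]] := hproj Npmod M g (fun a (y : obj M a) => y) g_pmorph g_surj idm.
have top0 : forall w, (w <= i)%O -> forall (y : obj M w) (k : Ka w),
    (hl w y)@_k != 0 -> (tag (val k) < w)%O.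
  move=> w hw y k nz; case: (boolP (tag (val k) < w)%O) => // nlt; exfalso; move/negP: nz; apply.
  have [n [q [hq [z E]]]] := HD w hw y.
  rewrite E (rl_sum (hm.1 w)) raddf_sum; apply/eqP; rewrite big1 // => j _.
  rewrite (hm.2 _ _ (ltW (hq j))) /= NmorE insubF //.
  apply/negP => le; move/negP: nlt; apply; exact: le_lt_trans le (hq j).
set v := hl i x.
have Ex : x = \sum_(k <- msupp v) v@_k *: phi k by rewrite -[LHS](hgh i x) gD.
have Ev : v = \sum_(k <- msupp v) v@_k *:
     Nmor (valP k) (hl _ (tagged (val k))).
  rewrite {1}/v {1}Ex (rl_sum (hm.1 i)); apply: eq_bigr => k _.
  by rewrite (rl_scale (hm.1 i)) /phi (hm.2 _ _ (valP k)).
have Ec : forall k' : Ka i, v@_k' = \sum_(k <- msupp v) v@_k *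
    oapp (fun k0 => (hl _ (tagged (val k)))@_k0) 0
      (insub (val k') : option (Ka0 (tag (val k)))).
  move=> k'; rewrite {1}Ev raddf_sum; apply: eq_bigr => k _.
  apply: (etrans (mcoeffZ _ _ _)); congr (_ * _); exact: NmorE.
have Es : (msupp v : seq _) = [::].
  apply: (@no_max _ _ _ (fun k : Ka i => tag (val k))) => k' k'in.
  have : v@_k' != 0 by rewrite mcoeff_neq0.
  rewrite Ec => nz.
  case: (boolP (has (fun k : Ka i => v@_k * oapp (fun k0 => (hl _ (tagged (val k)))@_k0) 0
      (insub (val k') : option (Ka0 (tag (val k)))) != 0) (msupp v))).
    move=> /hasP [k kin]; case: insubP => [k0 _ Ek0|_] /=; last by rewrite mulr0 eqxx.
    move=> nzk; exists k => //.
    have nz0 : (hl _ (tagged (val k)))@_k0 != 0.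
      by apply: contraNneq nzk => ->; rewrite mulr0.
    have := top0 _ (valP k) _ k0 nz0.
    by rewrite -Ek0.
  move=> /hasPn allz; exfalso; move/eqP: nz; apply.
  by apply: big1_seq => k /andP [_ kin]; apply/eqP; move: (allz k kin); rewrite negbK.
by rewrite Ex Es big_nil.
Qed.

End S.

Unset Implicit Arguments.
Theorem corollary3p12 (R : idomainType) (R_pid : is_pid R)
  (d : Order.disp_t) (P : latticeType d) (P_group : lattice_group P)
  (M : pmod R P) (M_proj : graded_projective M)
  (M_fg : forall a : P, fin_gen (obj M a))
  (i : P) (M_i_nz : exists x : obj M i, x != 0) :
  exists w : P, (w <= i)%O /\
    ((forall x : obj M w, in_D M x) -> False) /\
    (exists x : obj M w, indecomposable M x).
Proof.
have [x0 nz] := M_i_nz.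
have H : ~ (forall w, (w <= i)%O -> forall x : obj M w, in_D M x).
  move=> HD; move/eqP: nz; apply; exact: (@main_zero R d P M M_proj i HD x0).
have [w Hw] := not_all_ex_not _ _ H.
have [wi Hn] := imply_to_and _ _ Hw.
exists w; split => //; split => //.
have [x Hx] := not_all_ex_not _ _ Hn.
by exists x.
Qed.
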